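(* Let $\mathcal{T}$ be a single-elimination tournament with at least $2$ players and $N$ total brackets, let $R$ be a uniformly random bracket, and let $q_{\mathrm{pair}}=\min_{a,b\in P(\mathcal{T}),\,a\ne b}\Pr[R(x_{a,b})\in\{a,b\}]$. If $\sigma$ is a scoring system with distinct subset sums, then $\mathrm{res}(\mathcal{T},\sigma)=(1-q_{\mathrm{pair}})N+1$.
   Context: A single-elimination tournament is a finite directed graph $\mathcal{T}$ such that: (a) $\mathcal{T}$ has exactly one sink (vertex with no out-neighbours); (b) every non-sink vertex has exactly one out-neighbour; (c) $\mathcal{T}$ has no directed cycles; (d) $|N^-(v)|\ne 1$ for every vertex $v$, where $N^-(v)$ denotes the set of in-neighbours of $v$. The players $P(\mathcal{T})$ are the sources and the matches are $M(\mathcal{T})=V(\mathcal{T})\setminus P(\mathcal{T})$. For a vertex $u$, $P(u)$ is the set of players $a$ for which there is a directed walk from $a$ to $u$ (length $0$ allowed). For distinct players $a,b$, $x_{a,b}$ denotes the unique match $x$ having in-neighbours $u_a,u_b\in N^-(x)$ with $P(u_a)\cap\{a,b\}=\{a\}$ and $P(u_b)\cap\{a,b\}=\{b\}$ (such a match exists and is unique). A bracket is a function $B:V(\mathcal{T})\to P(\mathcal{T})$ with $B(a)=a$ for every player $a$ and $B(x)\in\{B(u):u\in N^-(x)\}$ for every match $x$. A scoring system is any function $\sigma:M(\mathcal{T})\to\mathbb{R}_{>0}$; it has distinct subset sums if for any two sets of matches $M,M'$, $\sum_{x\in M}\sigma(x)=\sum_{x\in M'}\sigma(x)$ implies $M=M'$.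 For brackets $B,B'$ let $\mathrm{score}_\sigma(B,B')=\sum_{x\in M(\mathcal{T}):\,B(x)=B'(x)}\sigma(x)$. A set of brackets $\mathcal{B}$ is $\sigma$-resolving if for every pair of distinct brackets $B\ne B'$ there is $B_i\in\mathcal{B}$ with $\mathrm{score}_\sigma(B_i,B)\ne\mathrm{score}_\sigma(B_i,B')$. $\mathrm{res}(\mathcal{T},\sigma)$ is the minimum $r$ such that every set of $r$ brackets is $\sigma$-resolving. *)

(* Defs.v *)
From HB Require Import structures.
From mathcomp Require Import all_boot all_order all_algebra.
From mathcomp Require Import reals.
Set Implicit Arguments. Unset Strict Implicit. Unset Printing Implicit Defensive.
Import Order.TTheory GRing.Theory Num.Theory.
Local Open Scope ring_scope.

Section Tournament.
Variables (V : finType) (E : rel V).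
(* E u v : there is a directed edge u -> v (u is an in-neighbour of v). *)

Definition sinkb (v : V) : bool := [forall w, ~~ E v w].

Definition is_tournament : Prop :=
  [/\ #|[set v | sinkb v]| = 1%N,
      (forall v, ~~ sinkb v -> #|[set w | E v w]| = 1%N),
      (forall u v, E u v -> ~~ connect E v u)
    & (forall v, #|[set u | E u v]| != 1%N)].

Definition playerb (v : V) : bool := [forall u, ~~ E u v].
Definition matchb (v : V) : bool := ~~ playerb v.
Definition players : {set V} := [set v | playerb v].

(* a \in P(u) for a player a iff there is a directed walk from a to u *)
Definition inP (u a : V) : bool := playerb a && connect E a u.

Definition is_xab (a b x : V) : bool :=
  matchb x &&
  [exists ua, exists ub,
     [&& E ua x, E ub x,
         inP ua a, ~~ inP ua b, inP ub b & ~~ inP ub a]].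

(* x_{a,b} (exists and is unique for a tournament; default a otherwise) *)
Definition xab (a b : V) : V := odflt a [pick x | is_xab a b x].

Definition is_bracket (B : {ffun V -> V}) : bool :=
  [forall v, playerb (B v)] &&
  [forall v, if playerb v then B v == v
             else [exists u, E u v && (B v == B u)]].

Definition brackets : {set {ffun V -> V}} := [set B | is_bracket B].

Variable R : realType.

Definition prob_pair (a b : V) : R :=
  #|[set B in brackets | (B (xab a b) == a) || (B (xab a b) == b)]|%:R
  / #|brackets|%:R.

(* minimum over ordered pairs of distinct players (the default 1 is irrelevant
   once there are at least two players, all probabilities being <= 1) *)
Definition q_pair : R :=
  \big[Num.min/1]_(p : V * V | [&& playerb p.1, playerb p.2 & p.1 != p.2])
     prob_pair p.1 p.2.

Variable sigma : V -> R.

Definition scoring_system : Prop := forall x, matchb x -> 0 < sigma x.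

Definition distinct_subset_sums : Prop :=
  forall M M' : {set V}, {subset M <= matchb} -> {subset M' <= matchb} ->
    \sum_(x in M) sigma x = \sum_(x in M') sigma x -> M = M'.

Definition score (B B' : {ffun V -> V}) : R :=
  \sum_(x | matchb x && (B x == B' x)) sigma x.

Definition resolving (S : {set {ffun V -> V}}) : Prop :=
  forall B B', B \in brackets -> B' \in brackets -> B <> B' ->
    exists2 Bi, Bi \in S & score Bi B <> score Bi B'.

Definition is_res (r : nat) : Prop :=
  (forall S : {set {ffun V -> V}}, S \subset brackets -> #|S| = r -> resolving S) /\
  (forall r', (r' < r)%N ->
     ~ (forall S : {set {ffun V -> V}}, S \subset brackets -> #|S| = r' -> resolving S)).

End Tournament.

(* Main.v *)
Require Import Defs.
From HB Require Import structures.
From mathcomp Require Import all_boot all_order all_algebra.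
From mathcomp Require Import reals zify.
Import Order.TTheory GRing.Theory Num.Theory.
Set Implicit Arguments. Unset Strict Implicit. Unset Printing Implicit Defensive.



Definition anc (V : finType) (E : rel V) (v : V) : {set V} := [set w | connect E w v].

Lemma first_step (V : finType) (E : rel V) (w v : V) :
  connect E w v -> w = v \/ exists2 u, E w u & connect E u v.
Proof.
move=> /connectP [p]; elim: p w => [|u p IH] w /=; first by left.
move=> /andP [Ewu pu] ->; right; exists u => //.
by apply/connectP; exists p.
Qed.

Lemma last_step (V : finType) (E : rel V) (w v : V) :
  connect E w v -> w = v \/ exists2 u, connect E w u & E u v.
Proof.
move=> /connectP [p]; elim: p w => [|u p IH] w /=; first by left.
move=> /andP [Ewu pu] ev; right.
have [<-|[u' cu Eu]] := IH u pu ev; first by exists w.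
by exists u' => //; apply: connect_trans (connect1 Ewu) cu.
Qed.

Lemma out_uniq (V : finType) (E : rel V) : is_tournament E ->
  forall v w w', E v w -> E v w' -> w = w'.
Proof.
case=> _ H1 _ _ v w w' Ew Ew'.
have ns : ~~ sinkb E v by apply/forallP => /(_ w); rewrite Ew.
have /eqP/cards1P [z Hz] := H1 v ns.
have : w \in [set w | E v w] by rewrite inE.
have : w' \in [set w | E v w] by rewrite inE.
by rewrite Hz !inE => /eqP -> /eqP ->.
Qed.

Lemma acyc (V : finType) (E : rel V) : is_tournament E ->
  forall u v, E u v -> ~~ connect E v u.
Proof. by case. Qed.

Lemma anc_lt (V : finType) (E : rel V) : is_tournament E ->
  forall u v, E u v -> #|anc E u| < #|anc E v|.
Proof.
move=> T u v Euv; apply: proper_card; rewrite properE; apply/andP; split.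
  by apply/subsetP => w; rewrite !inE => cw; apply: connect_trans cw (connect1 Euv).
apply/subsetPn; exists v; first by rewrite inE connect0.
by rewrite inE; apply: acyc T _ _ Euv.
Qed.

Lemma anc_le (V : finType) (E : rel V) :
  forall u v, connect E u v -> #|anc E u| <= #|anc E v|.
Proof.
move=> u v c; apply: subset_leq_card; apply/subsetP => w; rewrite !inE => cw.
exact: connect_trans cw c.
Qed.

Lemma reach_cmp (V : finType) (E : rel V) : is_tournament E ->
  forall a u v, connect E a u -> connect E a v -> connect E u v \/ connect E v u.
Proof.
move=> T a u v /connectP [p]; elim: p a => [|a1 p IH] a /=.
  by move=> _ -> cv; left.
move=> /andP [Ea1 pp] Eu cv.
have [<-|[a2 Ea2 c2]] := first_step cv.
  by right; apply/connectP; exists (a1 :: p) => //=; rewrite Ea1.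
rewrite -(out_uniq T Ea1 Ea2) in c2.
exact: IH pp Eu c2.
Qed.

Lemma disj (V : finType) (E : rel V) : is_tournament E ->
  forall a u u' x, E u x -> E u' x -> connect E a u -> connect E a u' -> u = u'.
Proof.
move=> T.
suff H : forall u u' x, E u x -> E u' x -> connect E u u' -> u = u'.
  move=> a u u' x Eu Eu' cu cu'.
  have [c|c] := reach_cmp T cu cu'; first exact: H Eu Eu' c.
  by apply/esym; apply: H Eu' Eu c.
move=> u u' x Eu Eu' c.
have [//|[u1 Eu1 c1]] := first_step c.
rewrite -(out_uniq T Eu Eu1) in c1.
by move: (acyc T Eu'); rewrite c1.
Qed.

Lemma player_noin (V : finType) (E : rel V) a u : playerb E a -> E u a = false.
Proof. by move=> /forallP /(_ u) /negbTE. Qed.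

Lemma player_connect (V : finType) (E : rel V) a w :
  playerb E a -> connect E w a -> w = a.
Proof.
move=> pa c; have [//|[u _ Eu]] := last_step c.
by rewrite player_noin in Eu.
Qed.

Lemma match_in (V : finType) (E : rel V) v : ~~ playerb E v -> exists u, E u v.
Proof. by move=> /forallPn [u]; rewrite negbK => Eu; exists u. Qed.

Lemma anc_ind (V : finType) (E : rel V) (T : is_tournament E) (P : V -> Prop) :
  (forall v, (forall u, E u v -> P u) -> P v) -> forall v, P v.
Proof.
move=> IH v; move: {2}#|anc E v| (leqnn #|anc E v|) => n; elim: n v => [|n IHn] v.
  by rewrite leqn0 => /eqP/cards0_eq/setP/(_ v); rewrite !inE connect0.
move=> hv; apply: IH => u Eu; apply: IHn.
by rewrite -ltnS; apply: leq_trans (anc_lt T Eu) hv.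
Qed.



Section S.
End S.

Lemma br_player (V : finType) (E : rel V) (C : {ffun V -> V}) v :
  is_bracket E C -> playerb E (C v).
Proof. by case/andP => /forallP H _. Qed.

Lemma br_pl (V : finType) (E : rel V) (C : {ffun V -> V}) v :
  is_bracket E C -> playerb E v -> C v = v.
Proof. by case/andP => _ /forallP /(_ v); case: (playerb E v) => // /eqP. Qed.

Lemma br_match (V : finType) (E : rel V) (C : {ffun V -> V}) v :
  is_bracket E C -> ~~ playerb E v -> exists2 u, E u v & C v = C u.
Proof.
case/andP => _ /forallP /(_ v); case: (playerb E v) => // /existsP [u /andP [Eu /eqP e]] _.
by exists u.
Qed.

Lemma br_reach (V : finType) (E : rel V) (T : is_tournament E) (C : {ffun V -> V}) :
  is_bracket E C -> forall v, connect E (C v) v.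
Proof.
move=> BC; apply: (anc_ind T) => v IH.
case pv: (playerb E v); first by rewrite (br_pl BC pv) connect0.
have [u Eu ->] := br_match BC (negbT pv).
exact: connect_trans (IH u Eu) (connect1 Eu).
Qed.

Lemma br_mono (V : finType) (E : rel V) (T : is_tournament E) (C : {ffun V -> V}) :
  is_bracket E C -> forall v w, connect E w v -> connect E (C v) w -> C w = C v.
Proof.
move=> BC; apply: (anc_ind T) => v IH w cwv cw.
have [->//|[u' cu' Eu']] := last_step cwv.
have pv : ~~ playerb E v by apply/negP => /(player_noin u') ; rewrite Eu'.
have [u Eu eC] := br_match BC pv.
have uu : u = u'.
  apply: (disj T Eu Eu' (a := C v)); first by rewrite eC; exact: br_reach.
  exact: connect_trans cw cu'.
rewrite -uu in cu'; rewrite eC; apply: (IH u Eu w cu').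
by rewrite -eC.
Qed.

Lemma xab_uniq (V : finType) (E : rel V) (T : is_tournament E) a b x y :
  is_xab E a b x -> is_xab E a b y -> x = y.
Proof.
suff H : forall x y, is_xab E a b x -> is_xab E a b y -> connect E x y -> x = y.
  move=> hx hy.
  case/andP: (hx) => _ /existsP [ua /existsP [ub /and5P [Eua Eub /andP [_ ca] _ _]]].
  case/andP: (hy) => _ /existsP [ua' /existsP [ub' /and5P [Eua' Eub' /andP [_ ca'] _ _]]].
  have cx := connect_trans ca (connect1 Eua).
  have cy := connect_trans ca' (connect1 Eua').
  have [c|c] := reach_cmp T cx cy; first exact: H.
  by apply/esym/H.
move=> {}x {}y hx hy cxy.
have [->//|[w cw Ew]] := last_step cxy.
case/andP: (hx) => _ /existsP [ua /existsP [ub /and5P [Eua Eub /andP [_ ca] _ /andP [/andP [_ cb] _]]]].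
case/andP: (hy) => _ /existsP [ua' /existsP [ub' /and5P [Eua' Eub' ia' _ /andP [ib' nia']]]].
have caw : connect E a w by apply: connect_trans ca (connect_trans (connect1 Eua) cw).
have cbw : connect E b w by apply: connect_trans cb (connect_trans (connect1 Eub) cw).
case/andP: (ia') => _ ca'; case/andP: (ib') => _ cb'.
have e1 := disj T Ew Eua' caw ca'.
have e2 := disj T Ew Eub' cbw cb'.
by move: nia'; rewrite -e2 e1 ia'.
Qed.

Lemma xabE (V : finType) (E : rel V) (T : is_tournament E) a b x :
  is_xab E a b x -> xab E a b = x.
Proof.
move=> hx; rewrite /xab; case: pickP => [y hy|/(_ x)]; last by rewrite hx.
exact: xab_uniq hy hx.
Qed.

Lemma xab_above (V : finType) (E : rel V) (T : is_tournament E) a b x v :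
  is_xab E a b x -> connect E a v -> connect E b v -> connect E x v.
Proof.
case/andP => _ /existsP [ua /existsP [ub /and5P [Eua Eub /andP [pa ca] _ /andP [/andP [_ cb] nia]]]].
move=> cav cbv.
have cx := connect_trans ca (connect1 Eua).
have [//|c] := reach_cmp T cx cav.
have [<-|[w cw Ew]] := last_step c; first exact: connect0.
have e1 := disj T Ew Eua (connect_trans cav cw) ca.
have e2 := disj T Ew Eub (connect_trans cbv cw) cb.
by move: nia; rewrite -e2 e1 /inP pa ca.
Qed.



Lemma reach_sink (V : finType) (E : rel V) (T : is_tournament E) v :
  exists2 s, sinkb E s & connect E v s.
Proof.
move: {2}(#|V| - #|anc E v|) (leqnn (#|V| - #|anc E v|)) => n.
elim: n v => [|n IH] v hv; case sv: (sinkb E v); try by exists v => //; rewrite connect0.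
- have [w] : exists w, E v w by move/negbT: sv => /forallPn [w]; rewrite negbK; exists w.
  move=> Ew; have := anc_lt T Ew; have := max_card (anc E w). lia.
- have [w] : exists w, E v w by move/negbT: sv => /forallPn [w]; rewrite negbK; exists w.
  move=> Ew; have lt := anc_lt T Ew; have := max_card (anc E w) => mw.
  have [s ss cs] := IH w ltac:(lia).
  by exists s => //; apply: connect_trans (connect1 Ew) cs.
Qed.

Lemma sink_uniq (V : finType) (E : rel V) (T : is_tournament E) s s' :
  sinkb E s -> sinkb E s' -> s = s'.
Proof.
case: T => /eqP/cards1P [z Hz] _ _ _ h h'.
have : s \in [set v | sinkb E v] by rewrite inE.
have : s' \in [set v | sinkb E v] by rewrite inE.
by rewrite Hz !inE => /eqP -> /eqP ->.
Qed.

Lemma xab_exists (V : finType) (E : rel V) (T : is_tournament E) a b :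
  playerb E a -> playerb E b -> a != b -> exists x, is_xab E a b x.
Proof.
move=> pa pb nab.
have [s ss cas] := reach_sink T a.
have [s' ss' cbs] := reach_sink T b.
rewrite -(sink_uniq T ss ss') in cbs.
pose Cm := [set v | connect E a v && connect E b v].
have sC : s \in Cm by rewrite inE cas cbs.
case: (arg_minnP (fun v => #|anc E v|) sC) => x.
move=> hx hmin; have hmin' : forall j, j \in Cm -> #|anc E x| <= #|anc E j| := hmin.
have : x \in Cm := hx. rewrite inE => /andP [cax cbx].
exists x.
have [eax|[ua cua Eua]] := last_step cax.
  by rewrite -eax in cbx; move: nab; rewrite (player_connect pa cbx) eqxx.
have [ebx|[ub cub Eub]] := last_step cbx.
  by rewrite -ebx in cax; move: nab; rewrite (player_connect pb cax) eqxx.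
apply/andP; split; first by apply/negP => /(player_noin ua); rewrite Eua.
apply/existsP; exists ua; apply/existsP; exists ub.
rewrite Eua Eub /inP pa pb cua cub /=.
apply/andP; split.
  apply/negP => cbua.
  have := hmin' ua; rewrite inE cua cbua => /(_ isT); have := anc_lt T Eua. by move=> lt; rewrite leqNgt lt.
apply/negP => caub.
have := hmin' ub; rewrite inE cub caub => /(_ isT); have := anc_lt T Eub. by move=> lt; rewrite leqNgt lt.
Qed.

Lemma disagree (V : finType) (E : rel V) (T : is_tournament E) (B B' : {ffun V -> V}) :
  is_bracket E B -> is_bracket E B' -> B != B' ->
  exists a b x, [/\ a != b, is_xab E a b x, B x = a & B' x = b].
Proof.
move=> bB bB' nBB.
have [y hy] : exists y, B y != B' y.
  apply/existsP; apply: contraNT nBB => /existsPn H; apply/eqP/ffunP => y.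
  by have := H y; rewrite negbK => /eqP.
pose D := [set v | B v != B' v].
have yD : y \in D by rewrite inE.
case: (arg_minnP (fun v => #|anc E v|) yD) => x.
move=> nx hmin; have hmin' : forall j, j \in D -> #|anc E x| <= #|anc E j| := hmin.
have : x \in D := nx. rewrite inE => {}nx.
have below : forall w, E w x -> B w = B' w.
  move=> w Ew; apply/eqP; apply: contraT => nw.
  have := hmin' w; rewrite inE => /(_ nw); have := anc_lt T Ew. by move=> lt; rewrite leqNgt lt.
have px : ~~ playerb E x.
  by apply: contra nx => px; rewrite (br_pl bB px) (br_pl bB' px).
have [u Eu eu] := br_match bB px.
have [u' Eu' eu'] := br_match bB' px.
exists (B x), (B' x), x; split => //.
apply/andP; split => //.
apply/existsP; exists u; apply/existsP; exists u'.
have ca : connect E (B x) u by rewrite eu; exact: br_reach.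
have cb : connect E (B' x) u' by rewrite eu'; exact: br_reach.
rewrite Eu Eu' /inP (br_player _ bB) (br_player _ bB') ca cb /=.
apply/andP; split.
  apply/negP => cbu; have uu := disj T Eu Eu' cbu cb.
  by move: nx; rewrite eu eu' -uu below // eqxx.
apply/negP => cau; have uu := disj T Eu Eu' ca cau.
by move: nx; rewrite eu eu' -uu below // eqxx.
Qed.



Definition stepf (V : finType) (E : rel V) (c : V -> V) (v : V) :=
  if playerb E v then v else c v.
Definition Bc (V : finType) (E : rel V) (c : V -> V) : {ffun V -> V} :=
  [ffun v => iter #|V| (stepf E c) v].

Section Cons.
End Cons.

Lemma iter_player (V : finType) (E : rel V) (T : is_tournament E) (c : V -> V) :
  (forall v, ~~ playerb E v -> E (c v) v) ->
  forall n v, #|anc E v| <= n -> playerb E (iter n (stepf E c) v).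
Proof.
move=> hc; elim=> [|n IH] v hv.
  by move: hv; rewrite leqn0 => /eqP/cards0_eq/setP/(_ v); rewrite !inE connect0.
rewrite iterSr.
case pv: (playerb E v).
  by rewrite /stepf pv iter_fix // /stepf pv.
rewrite /stepf pv; apply: IH.
by rewrite -ltnS; apply: leq_trans (anc_lt T (hc v (negbT pv))) hv.
Qed.

Lemma Bc_player (V : finType) (E : rel V) (T : is_tournament E) (c : V -> V) :
  (forall v, ~~ playerb E v -> E (c v) v) -> forall v, playerb E (Bc E c v).
Proof. by move=> hc v; rewrite ffunE; apply: (iter_player T hc); exact: max_card. Qed.

Lemma Bc_pl (V : finType) (E : rel V) (c : V -> V) v :
  playerb E v -> Bc E c v = v.
Proof. by move=> pv; rewrite ffunE iter_fix // /stepf pv. Qed.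

Lemma Bc_match (V : finType) (E : rel V) (T : is_tournament E) (c : V -> V) :
  (forall v, ~~ playerb E v -> E (c v) v) ->
  forall v, ~~ playerb E v -> Bc E c v = Bc E c (c v).
Proof.
move=> hc v pv; have pl := Bc_player T hc v.
rewrite !ffunE in pl *.
have -> : c v = stepf E c v by rewrite /stepf (negbTE pv).
rewrite -iterSr iterS; move: pl; set w := iter _ _ _ => pl; by rewrite {1}/stepf pl.
Qed.

Lemma Bc_bracket (V : finType) (E : rel V) (T : is_tournament E) (c : V -> V) :
  (forall v, ~~ playerb E v -> E (c v) v) -> is_bracket E (Bc E c).
Proof.
move=> hc; apply/andP; split; first by apply/forallP => v; exact: (Bc_player T hc).
apply/forallP => v; case pv: (playerb E v); first by rewrite Bc_pl.
apply/existsP; exists (c v); rewrite hc ?pv //= (Bc_match T hc) ?pv //.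
Qed.

Definition cpri (V : finType) (E : rel V) (a b : V) (v : V) : V :=
  if [pick u | E u v && connect E a u] is Some u then u
  else if [pick u | E u v && connect E b u] is Some u then u
  else odflt v [pick u | E u v].

Lemma cpri_ok (V : finType) (E : rel V) a b :
  forall v, ~~ playerb E v -> E (cpri E a b v) v.
Proof.
move=> v pv; rewrite /cpri; case: pickP => [u /andP [] //|_].
case: pickP => [u /andP [] //|_].
case: pickP => [u //|H]; have [u Eu] := match_in pv.
by rewrite H in Eu.
Qed.

Lemma pick_none (V : finType) (E : rel V) (a v : V) :
  ~~ connect E a v -> [pick u | E u v && connect E a u] = None.
Proof.
move=> nc; case: pickP => // u /andP [Eu cu].
by move: nc; rewrite (connect_trans cu (connect1 Eu)).
Qed.

Lemma cpri_first (V : finType) (E : rel V) a b v :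
  playerb E a -> ~~ playerb E v -> connect E a v -> connect E a (cpri E a b v).
Proof.
move=> pa pv cav; rewrite /cpri; case: pickP => [u /andP [Eu cu] //|H].
have [eav|[u cu Eu]] := last_step cav; first by move: pv; rewrite -eav pa.
by move: (H u); rewrite Eu cu.
Qed.

Lemma cpri_second (V : finType) (E : rel V) a b v :
  playerb E b -> ~~ playerb E v -> ~~ connect E a v -> connect E b v ->
  connect E b (cpri E a b v).
Proof.
move=> pb pv nav cbv; rewrite /cpri pick_none //; case: pickP => [u /andP [Eu cu] //|H].
have [ebv|[u cu Eu]] := last_step cbv; first by move: pv; rewrite -ebv pb.
by move: (H u); rewrite Eu cu.
Qed.

Lemma L14 (V : finType) (E : rel V) (T : is_tournament E) a b :
  playerb E a -> forall v, connect E a v -> Bc E (cpri E a b) v = a.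
Proof.
move=> pa; apply: (anc_ind T) => v IH cav.
case pv: (playerb E v).
  by rewrite Bc_pl // (player_connect pv cav).
rewrite (Bc_match T (@cpri_ok _ E a b)) ?pv //.
apply: IH; first by apply: cpri_ok; rewrite pv.
by apply: cpri_first; rewrite ?pv.
Qed.

Lemma L15 (V : finType) (E : rel V) (T : is_tournament E) a b :
  playerb E b -> forall v, ~~ connect E a v -> connect E b v -> Bc E (cpri E a b) v = b.
Proof.
move=> pb; apply: (anc_ind T) => v IH nav cbv.
case pv: (playerb E v).
  by rewrite Bc_pl // (player_connect pv cbv).
have Eu := @cpri_ok _ E a b v (negbT pv).
rewrite (Bc_match T (@cpri_ok _ E a b)) ?pv //.
apply: IH => //; last by apply: cpri_second; rewrite ?pv.
by apply: contra nav => cau; exact: connect_trans cau (connect1 Eu).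
Qed.

Lemma L16 (V : finType) (E : rel V) (T : is_tournament E) a b :
  forall v, ~~ connect E a v -> ~~ connect E b v ->
  Bc E (cpri E a b) v = Bc E (cpri E b a) v.
Proof.
apply: (anc_ind T) => v IH nav nbv.
case pv: (playerb E v); first by rewrite !Bc_pl.
rewrite (Bc_match T (@cpri_ok _ E a b)) ?pv //.
rewrite (Bc_match T (@cpri_ok _ E b a)) ?pv //.
have -> : cpri E b a v = cpri E a b v by rewrite /cpri !pick_none.
have Eu := @cpri_ok _ E a b v (negbT pv).
apply: IH => //.
  by apply: contra nav => c; exact: connect_trans c (connect1 Eu).
by apply: contra nbv => c; exact: connect_trans c (connect1 Eu).
Qed.

Lemma lower (V : finType) (E : rel V) (T : is_tournament E) (R : realType) (sigma : V -> R) a b x :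
  playerb E a -> playerb E b -> a != b -> is_xab E a b x ->
  exists B, exists B', [/\ B \in brackets E, B' \in brackets E, B != B' &
     forall C, is_bracket E C -> ~~ ((C x == a) || (C x == b)) ->
        score E sigma C B = score E sigma C B'].
Proof.
move=> pa pb nab hx.
have cax : connect E a x.
  case/andP: (hx) => _ /existsP [ua /existsP [ub /and5P [Eua _ /andP [_ ca] _ _]]].
  exact: connect_trans ca (connect1 Eua).
have cbx : connect E b x.
  case/andP: (hx) => _ /existsP [ua /existsP [ub /and5P [_ Eub _ _ /andP [/andP [_ cb] _]]]].
  exact: connect_trans cb (connect1 Eub).
exists (Bc E (cpri E a b)), (Bc E (cpri E b a)); split.
- by rewrite inE; apply: (Bc_bracket T); exact: cpri_ok.
- by rewrite inE; apply: (Bc_bracket T); exact: cpri_ok.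
- apply/negP => /eqP e; move: (congr1 (fun f : {ffun V -> V} => f x) e) => /=.
  by rewrite (L14 T b pa cax) (L14 T a pb cbx) => eab; move: nab; rewrite eab eqxx.
move=> C bC nC; apply: eq_bigl => v; congr (_ && _).
case cav: (connect E a v); case cbv: (connect E b v).
- have cxv := xab_above T hx cav cbv.
  rewrite (L14 T b pa cav) (L14 T a pb cbv).
  have [ea|na] := eqVneq (C v) a.
    by move: nC; rewrite (br_mono T bC cxv) ?ea ?eqxx.
  have [eb|nb] := eqVneq (C v) b.
    by move: nC; rewrite (br_mono T bC cxv) ?eb ?eqxx ?orbT.
  by [].
- by rewrite (L14 T b pa cav) (L15 T pa (negbT cbv) cav).
- by rewrite (L15 T pb (negbT cav) cbv) (L14 T a pb cbv).
- by rewrite (L16 T (negbT cav) (negbT cbv)).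
Qed.



Lemma upper (V : finType) (E : rel V) (T : is_tournament E) (R : realType) (sigma : V -> R) :
  distinct_subset_sums E sigma ->
  forall B B', B \in brackets E -> B' \in brackets E -> B != B' ->
  exists a, exists b, [/\ playerb E a, playerb E b, a != b &
    forall C, score E sigma C B = score E sigma C B' ->
      ~~ ((C (xab E a b) == a) || (C (xab E a b) == b))].
Proof.
move=> dss B B'; rewrite !inE => bB bB' nBB.
have [a [b [x [nab hx eBa eBb]]]] := disagree T bB bB' nBB.
exists a, b; split.
- by rewrite -eBa; exact: br_player.
- by rewrite -eBb; exact: br_player.
- by [].
move=> C sc; rewrite (xabE T hx).
have mx : matchb E x by case/andP: hx.
have sE : forall B0, score E sigma C B0 =
   (\sum_(v in [set v | matchb E v && (C v == B0 v)]) sigma v)%R.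
  by move=> B0; apply: eq_bigl => v; rewrite inE.
have eM := dss [set v | matchb E v && (C v == B v)] [set v | matchb E v && (C v == B' v)].
have {}eM : [set v | matchb E v && (C v == B v)] = [set v | matchb E v && (C v == B' v)].
  apply: eM; try by move=> v; rewrite inE => /andP [].
  by rewrite -!sE.
have := congr1 (fun S : {set V} => x \in S) eM; rewrite /= !inE mx /= eBa eBb.
have [ea|na] := eqVneq (C x) a.
  by rewrite ea (negbTE nab).
by move=> <-.
Qed.

Lemma compl_card (T : finType) (A : {set T}) (P : pred T) :
  #|[set x in A | P x]| + #|[set x in A | ~~ P x]| = #|A|.
Proof.
rewrite -(cardsID [set x | P x] A); congr (_ + _); apply: eq_card => x; by rewrite !inE // andbC.
Qed.

Unset Implicit Arguments. Set Strict Implicit.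
Local Open Scope ring_scope.

Theorem lemmaA2 (V : finType) (E : rel V) (R : realType) (sigma : V -> R) :
  is_tournament E ->
  (2 <= #|players E|)%N ->
  scoring_system E sigma ->
  distinct_subset_sums E sigma ->
  exists r : nat, is_res E sigma r /\
    (r%:R : R) = (1 - q_pair E R) * (#|brackets E|%:R) + 1.
Proof.
move=> T h2 _ dss.
pose PP := fun p : V * V => [&& playerb E p.1, playerb E p.2 & p.1 != p.2].
pose Pr := fun (p : V * V) (C : {ffun V -> V}) =>
  (C (xab E p.1 p.2) == p.1) || (C (xab E p.1 p.2) == p.2).
pose cnt := fun p : V * V => #|[set C in brackets E | Pr p C]|.
pose N := #|brackets E|.
have [a0 [b0 [ha0 hb0 nab0]]] := card_gt1P h2.
have PP0 : PP (a0, b0) by rewrite /PP /=; rewrite !inE in ha0 hb0; rewrite ha0 hb0.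
case: (arg_minnP cnt PP0) => p0 Pp0 hmin.
pose cmin := cnt p0.
have cntN : forall p, (cnt p <= N)%N.
  by move=> p; apply: subset_leq_card; apply/subsetP => C; rewrite inE => /andP [].
have complN : forall p, #|[set C in brackets E | ~~ Pr p C]| = (N - cnt p)%N.
  by move=> p; rewrite /N -(compl_card (brackets E) (Pr p)) /cnt addKn.
case/and3P: (Pp0) => pa pb nab.
have [x hx] := xab_exists T pa pb nab.
have [B [B' [inB inB' nBB eqsc]]] := lower T sigma pa pb nab hx.
have Npos : (0 < N)%N by apply/card_gt0P; exists B.
exists (N - cmin).+1; split; last first.
  have qE : q_pair E R = cmin%:R / N%:R.
    have N0 : (0 : R) < N%:R by rewrite ltr0n.
    apply/eqP; rewrite eq_le; apply/andP; split.
      exact: (bigmin_le_cond _ _ Pp0).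
    apply: (big_ind (fun y : R => cmin%:R / N%:R <= y)).
    - by rewrite ler_pdivrMr // mul1r ler_nat; exact: cntN.
    - by move=> u w hu hw; rewrite le_min hu hw.
    - move=> p Pp; rewrite /prob_pair ler_pdivlMr // divfK ?ler_nat.
        exact: hmin.
      by rewrite gt_eqF.
  rewrite qE -addn1 natrD natrB ?cntN //.
  by rewrite mulrBl mul1r divfK // gt_eqF // ltr0n.
split.
- move=> S sS cS Bx Bx' iB iB' nB.
  have [a [b [pa' pb' nab' hC]]] := upper T dss iB iB' (introN eqP nB).
  case: (boolP [exists Bi in S, score E sigma Bi Bx != score E sigma Bi Bx']).
    by case/existsP => Bi /andP [BiS /eqP ne]; exists Bi.
  move/existsPn => hS; exfalso.
  have sub : S \subset [set C in brackets E | ~~ Pr (a, b) C].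
    apply/subsetP => C CS; rewrite inE (subsetP sS) //=.
    apply: hC; have := hS C; rewrite CS /= => /negbNE /eqP //.
  have := subset_leq_card sub; rewrite complN cS.
  have : (cmin <= cnt (a, b))%N by apply: hmin; rewrite /PP /= pa' pb' nab'.
  move=> h1 h3; move: (leq_trans h3 (leq_sub2l N h1)); by rewrite ltnn.
- move=> r' hr' H.
  have hsz : (r' <= #|[set C in brackets E | ~~ Pr p0 C]|)%N by rewrite complN -ltnS.
  have [s [us ss subs]] := card_geqP hsz.
  pose S := [set C in s].
  have sS : S \subset brackets E.
    by apply/subsetP => C; rewrite inE => /subs; rewrite inE => /andP [].
  have cS : #|S| = r' by rewrite cardsE -ss; apply/card_uniqP.
  have [Bi BiS ne] := H S sS cS B B' inB inB' (fun e => (negP nBB) (introT eqP e)).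
  apply: ne; move: BiS; rewrite inE => /subs; rewrite inE => /andP [bBi nP].
  rewrite inE in bBi; apply: eqsc => //.
  by rewrite -(xabE T hx).
Qed.
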